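(* Let $\lambda$ and $g$ be as in the context, let $q(-1)=-1$ and let $q(0)$ be the fixed point of $g$ with negative multiplier. Then $g'(q(-1))=\left[g'(q(0))\right]^{2}$.
   Context: There is a unique constant $\lambda=2.5029\ldots$ and a unique infinitely (period-doubling) renormalizable analytic unimodal map $g:[-1,1]\to[-1,1]$ solving $g(x)=-\lambda\, g^{2}(-x/\lambda)$ for $-1\le x\le1$ ($g^2=g\circ g$). Unimodal means: $-1$ is the unique fixed point with positive multiplier, $g(1)=-1$, and $g$ has a unique maximum at an interior nondegenerate critical point $c^{(0)}$. Moreover $g$ is analytic near $[-1,1]$, even, concave on $[-c^{(1)},c^{(1)}]$ where $c^{(1)}=g(c^{(0)})$, satisfies $g(c^{(1)})=-c^{(1)}/\lambda$, $g'(c^{(1)})=-\lambda$, and has negative Schwarzian derivative. *)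

(* Defs.v *)
From Stdlib Require Import Reals.
From Coquelicot Require Import Coquelicot.
Open Scope R_scope.

Definition analytic_near_interval (g : R -> R) : Prop :=
  exists eps : R, 0 < eps /\
    forall x : R, -1 - eps < x < 1 + eps ->
      exists r : R, 0 < r /\
        exists a : nat -> R,
          forall y : R, Rabs (y - x) < r -> is_pseries a (y - x) (g y).

Definition schwarzian (g : R -> R) (x : R) : R :=
  Derive_n g 3 x / Derive g x
  - 3 / 2 * (Derive_n g 2 x / Derive g x) ^ 2.

Definition feigenbaum_pair (lam : R) (g : R -> R) : Prop :=
  2.5029 <= lam < 2.5030 /\
  (forall x, -1 <= x <= 1 -> -1 <= g x <= 1) /\
  analytic_near_interval g /\
  (forall x, -1 <= x <= 1 -> g x = - lam * g (g (- x / lam))) /\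
  (g (-1) = -1 /\ 0 < Derive g (-1)) /\
  (forall x, -1 <= x <= 1 -> g x = x -> 0 < Derive g x -> x = -1) /\
  g 1 = -1 /\
  (exists c0 : R,
     -1 < c0 < 1 /\
     (forall x, -1 <= x <= 1 -> x <> c0 -> g x < g c0) /\
     Derive g c0 = 0 /\ Derive_n g 2 c0 <> 0 /\
     (let c1 := g c0 in
      (forall x y t, - c1 <= x <= c1 -> - c1 <= y <= c1 -> 0 <= t <= 1 ->
         t * g x + (1 - t) * g y <= g (t * x + (1 - t) * y)) /\
      g c1 = - c1 / lam /\
      Derive g c1 = - lam) /\
     (forall x, -1 <= x <= 1 -> x <> c0 -> schwarzian g x < 0)) /\
  (forall x, -1 <= x <= 1 -> g (- x) = g x).

(* Main.v *)
Require Import Defs.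
From Stdlib Require Import Reals Lra.
From Coquelicot Require Import Coquelicot.
Open Scope R_scope.

Lemma loc_of_ball (x r : R) (P : R -> Prop) :
  0 < r -> (forall y, Rabs (y - x) < r -> P y) -> locally x P.
Proof.
  intros Hr H. exists (mkposreal r Hr). intros y Hy. apply H. exact Hy.
Qed.

Lemma radius_bound (a : nat -> R) (r : R) (f : R -> R) :
  (forall z, Rabs z < r -> is_pseries a z (f z)) ->
  forall y, Rabs y < r -> Rbar_lt (Rabs y) (CV_radius a).
Proof.
  intros H y Hy.
  set (z := (Rabs y + r) / 2).
  assert (Hz : Rabs z < r).
  { unfold z. rewrite (Rabs_pos_eq ((Rabs y + r) / 2)). lra. generalize (Rabs_pos y). lra. }
  assert (Hle : Rbar_le (Rabs z) (CV_radius a)).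
  { destruct (Rbar_le_lt_dec (Rabs z) (CV_radius a)) as [h|h]; [exact h|].
    exfalso. apply (CV_disk_outside a z h).
    apply ex_series_lim_0. apply ex_pseries_R. eexists. apply (H z Hz). }
  assert (Rabs y < Rabs z).
  { unfold z. rewrite (Rabs_pos_eq ((Rabs y + r) / 2)). lra. generalize (Rabs_pos y). lra. }
  destruct (CV_radius a) as [c| |]; simpl in *; try lra; try exact I; try contradiction.
Qed.

Lemma smooth (g : R -> R) :
  analytic_near_interval g ->
  exists eps, 0 < eps /\ forall x, -1 - eps < x < 1 + eps ->
     forall n, ex_derive (Derive_n g n) x.
Proof.
  intros [eps [Heps H]]. exists eps. split; [exact Heps|].
  intros x Hx n.
  destruct (H x Hx) as [r [Hr [a Ha]]].
  set (P := fun y => PSeries a (y + - x)).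
  assert (Hrad : forall y, Rabs (y - x) < r -> Rbar_lt (Rabs (y + - x)) (CV_radius a)).
  { intros y Hy. apply (radius_bound a r (fun z => g (z + x))).
    - intros z Hz. replace z with (z + x - x) at 1 by ring. apply Ha.
      replace (z + x - x) with z by ring. exact Hz.
    - exact Hy. }
  assert (HgP : forall y, Rabs (y - x) < r -> g y = P y).
  { intros y Hy. unfold P. symmetry. apply is_pseries_unique.
    replace (y + - x) with (y - x) by ring. apply Ha; exact Hy. }
  assert (Hloc : locally x (fun t => Derive_n P n t = Derive_n g n t)).
  { apply (loc_of_ball x r); [exact Hr|]. intros t Ht.
    apply Derive_n_ext_loc.
    apply (loc_of_ball t (r - Rabs (t - x))); [lra|].
    intros s Hs. symmetry. apply HgP.
    replace (s - x) with ((s - t) + (t - x)) by ring.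
    eapply Rle_lt_trans; [apply Rabs_triang|]. lra. }
  apply (ex_derive_ext_loc _ _ _ Hloc).
  assert (HP : forall t, Derive_n P n t = Derive_n (PSeries a) n (t + - x)).
  { intros t. unfold P. apply Derive_n_comp_trans. }
  apply (ex_derive_ext (fun t => Derive_n (PSeries a) n (t + - x))).
  { intros t. symmetry. apply HP. }
  apply (ex_derive_comp (Derive_n (PSeries a) n) (fun t => t + - x)).
  - apply (ex_derive_n_PSeries (S n)). apply Hrad.
    replace (x + - x) with (x - x) by ring. rewrite Rminus_diag, Rabs_R0. exact Hr.
  - auto_derive. exact I.
Qed.

Lemma L0 (f : R -> R) x l : derivable_pt_lim f x l -> l < 0 ->
  exists d, 0 < d /\ forall h, 0 < h < d -> f (x + h) < f x.
Proof.
  intros H Hl. destruct (H (- l / 2)) as [d Hd]; [lra|].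
  exists d. split; [apply cond_pos|]. intros h Hh.
  assert (Hq := Hd h ltac:(lra) ltac:(rewrite Rabs_pos_eq; lra)).
  apply Rabs_def2 in Hq. destruct Hq as [Hq1 Hq2].
  assert (Hq : (f (x + h) - f x) / h < 0) by lra.
  assert (f (x + h) - f x < 0).
  { replace (f (x + h) - f x) with ((f (x + h) - f x) / h * h) by (field; lra).
    nra. }
  lra.
Qed.

Lemma L0' (f : R -> R) x l : derivable_pt_lim f x l -> 0 < l ->
  exists d, 0 < d /\ forall h, 0 < h < d -> f (x - h) < f x.
Proof.
  intros H Hl. destruct (H (l / 2)) as [d Hd]; [lra|].
  exists d. split; [apply cond_pos|]. intros h Hh.
  assert (Hq := Hd (- h) ltac:(lra) ltac:(rewrite Rabs_Ropp, Rabs_pos_eq; lra)).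
  apply Rabs_def2 in Hq. destruct Hq as [Hq1 Hq2].
  assert (Hq : (f (x + - h) - f x) / (- h) > 0) by lra.
  assert (f (x + - h) - f x < 0).
  { replace (f (x + - h) - f x) with ((f (x + - h) - f x) / (- h) * (- h)) by (field; lra).
    nra. }
  replace (x - h) with (x + - h) by ring. lra.
Qed.

Lemma rightderiv_eq (f k : R -> R) x l1 l2 :
  derivable_pt_lim f x l1 -> derivable_pt_lim k x l2 ->
  (exists d, 0 < d /\ forall y, x <= y < x + d -> f y = k y) -> l1 = l2.
Proof.
  intros H1 H2 [d [Hd Heq]].
  assert (Hm := derivable_pt_lim_minus f k x l1 l2 H1 H2).
  destruct (Rtotal_order l1 l2) as [Hlt|[Heq'|Hgt]]; [|exact Heq'|].
  - destruct (L0 _ _ _ Hm ltac:(lra)) as [e [He Hx]].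
    specialize (Hx (Rmin e d / 2)).
    assert (0 < Rmin e d) by (apply Rmin_pos; lra).
    assert (Rmin e d <= e) by apply Rmin_l. assert (Rmin e d <= d) by apply Rmin_r.
    specialize (Hx ltac:(lra)). unfold minus_fct in Hx.
    rewrite (Heq x) in Hx by lra. rewrite (Heq (x + Rmin e d / 2)) in Hx by lra. lra.
  - assert (Hm' := derivable_pt_lim_minus k f x l2 l1 H2 H1).
    destruct (L0 _ _ _ Hm' ltac:(lra)) as [e [He Hx]].
    specialize (Hx (Rmin e d / 2)).
    assert (0 < Rmin e d) by (apply Rmin_pos; lra).
    assert (Rmin e d <= e) by apply Rmin_l. assert (Rmin e d <= d) by apply Rmin_r.
    specialize (Hx ltac:(lra)). unfold minus_fct in Hx.
    rewrite (Heq x) in Hx by lra. rewrite (Heq (x + Rmin e d / 2)) in Hx by lra. lra.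
Qed.

Lemma no_interior_min (F1 F2 F3 : R -> R) a b m :
  (forall x, a <= x <= b -> derivable_pt_lim F1 x (F2 x)) ->
  (forall x, a <= x <= b -> derivable_pt_lim F2 x (F3 x)) ->
  a < m < b -> (forall c, a <= c <= b -> F1 m <= F1 c) -> F2 m = 0 /\ 0 <= F3 m.
Proof.
  intros D1 D2 Hm Hmin.
  assert (HF2 : F2 m = 0).
  { destruct (Rtotal_order (F2 m) 0) as [Hlt|[Heq|Hgt]]; [|exact Heq|].
    - destruct (L0 _ _ _ (D1 m ltac:(lra)) Hlt) as [e [He Hx]].
      set (h := Rmin e (b - m) / 2).
      assert (0 < Rmin e (b - m)) by (apply Rmin_pos; lra).
      assert (Rmin e (b - m) <= e) by apply Rmin_l.
      assert (Rmin e (b - m) <= b - m) by apply Rmin_r.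
      specialize (Hx h ltac:(unfold h; lra)).
      specialize (Hmin (m + h) ltac:(unfold h; lra)). lra.
    - destruct (L0' _ _ _ (D1 m ltac:(lra)) Hgt) as [e [He Hx]].
      set (h := Rmin e (m - a) / 2).
      assert (0 < Rmin e (m - a)) by (apply Rmin_pos; lra).
      assert (Rmin e (m - a) <= e) by apply Rmin_l.
      assert (Rmin e (m - a) <= m - a) by apply Rmin_r.
      specialize (Hx h ltac:(unfold h; lra)).
      specialize (Hmin (m - h) ltac:(unfold h; lra)). lra. }
  split; [exact HF2|].
  destruct (Rlt_or_le (F3 m) 0) as [Hlt|Hge]; [|exact Hge]. exfalso.
  destruct (L0 _ _ _ (D2 m ltac:(lra)) Hlt) as [e [He Hx]].
  set (h := Rmin e (b - m) / 2).
  assert (0 < Rmin e (b - m)) by (apply Rmin_pos; lra).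
  assert (Rmin e (b - m) <= e) by apply Rmin_l.
  assert (Rmin e (b - m) <= b - m) by apply Rmin_r.
  destruct (MVT_cor2 F1 F2 m (m + h)) as [c [Hc1 Hc2]].
  { unfold h; lra. }
  { intros c Hc. apply D1. unfold h in Hc; lra. }
  specialize (Hx (c - m) ltac:(unfold h in Hc2; lra)).
  replace (m + (c - m)) with c in Hx by ring.
  specialize (Hmin (m + h) ltac:(unfold h; lra)).
  assert (0 < h) by (unfold h; lra).
  replace (m + h - m) with h in Hc1 by ring.
  nra.
Qed.

Ltac fixD g := try change (Derive (fun x0 : R => g x0)) with (Derive g);
  try change (Derive (fun x0 : R => Derive g x0)) with (Derive (Derive g));
  try change (Derive (fun x0 : R => Derive (Derive g) x0)) with (Derive (Derive (Derive g))).

Theorem mainTheorem6 (lam : R) (g : R -> R) (q0 : R) :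
  feigenbaum_pair lam g ->
  -1 <= q0 <= 1 -> g q0 = q0 -> Derive g q0 < 0 ->
  Derive g (-1) = (Derive g q0) ^ 2.
Proof.
  intros Hfp Hq0 Hgq0 Hdq0.
  destruct Hfp as [Hlam [Hrange [Han [Heq [[Hgm1 Hdm1] [Huniq [Hg1 [Hc Heven]]]]]]]].
  destruct Hc as [c0 [Hc0 [Hmax [Hdc0 [Hd2c0 [Hc1 Hschw]]]]]].
  cbv zeta in Hc1. destruct Hc1 as [Hconc [Hgc1 Hdc1]].
  destruct (smooth g Han) as [eps [Heps Hsm]].
  assert (Dg : forall x, -1 <= x <= 1 -> derivable_pt_lim g x (Derive g x)).
  { intros x Hx. apply is_derive_Reals. apply Derive_correct.
    exact (Hsm x ltac:(lra) 0%nat). }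
  assert (Dg1 : forall x, -1 <= x <= 1 -> derivable_pt_lim (Derive g) x (Derive (Derive g) x)).
  { intros x Hx. apply is_derive_Reals. apply Derive_correct.
    exact (Hsm x ltac:(lra) 1%nat). }
  assert (Dg2 : forall x, -1 <= x <= 1 ->
     derivable_pt_lim (Derive (Derive g)) x (Derive (Derive (Derive g)) x)).
  { intros x Hx. apply is_derive_Reals. apply Derive_correct.
    exact (Hsm x ltac:(lra) 2%nat). }
  assert (Eg : forall x, -1 <= x <= 1 -> ex_derive g x).
  { intros x Hx. exact (Hsm x ltac:(lra) 0%nat). }
  assert (Eg1 : forall x, -1 <= x <= 1 -> ex_derive (Derive g) x).
  { intros x Hx. exact (Hsm x ltac:(lra) 1%nat). }
  assert (Eg2 : forall x, -1 <= x <= 1 -> ex_derive (Derive (Derive g)) x).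
  { intros x Hx. exact (Hsm x ltac:(lra) 2%nat). }
  assert (Cg : forall x, -1 <= x <= 1 -> continuity_pt g x).
  { intros x Hx. apply derivable_continuous_pt. exists (Derive g x). apply Dg; exact Hx. }
  assert (Cg1 : forall x, -1 <= x <= 1 -> continuity_pt (Derive g) x).
  { intros x Hx. apply derivable_continuous_pt. exists (Derive (Derive g) x). apply Dg1; exact Hx. }
  assert (Hc00 : c0 = 0).
  { destruct (Req_dec c0 0) as [h|h]; [exact h|].
    assert (H1 := Hmax (- c0) ltac:(lra) ltac:(lra)).
    rewrite (Heven c0) in H1 by lra. lra. }
  subst c0.
  assert (Dnz : forall x, -1 <= x <= 1 -> x <> 0 -> Derive g x <> 0).
  { intros x Hx Hx0 Hd. assert (H1 := Hschw x Hx Hx0). unfold schwarzian in H1.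
    rewrite Hd in H1. unfold Rdiv in H1. rewrite Rinv_0 in H1. lra. }
  assert (Spos : forall x, -1 <= x < 0 -> 0 < Derive g x).
  { intros x Hx. destruct (Rlt_or_le 0 (Derive g x)) as [h|h]; [exact h|].
    exfalso. assert (h' : Derive g x < 0).
    { destruct h as [h|h]; [exact h|]. exfalso. apply (Dnz x); lra. }
    assert (Hxm : -1 < x).
    { destruct (Req_dec x (-1)) as [e|e]; [subst; lra|lra]. }
    destruct (Ranalysis5.IVT_interv (fun t => - Derive g t) (-1) x) as [z [Hz1 Hz2]].
    { intros t Ht. apply continuity_pt_opp. apply Cg1. lra. }
    { exact Hxm. } { lra. } { lra. }
    apply (Dnz z); lra. }
  assert (Sneg : forall x, 0 < x <= 1 -> Derive g x < 0).
  { intros x Hx. destruct (Rlt_or_le (Derive g x) 0) as [h|h]; [exact h|].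
    exfalso. assert (h' : 0 < Derive g x).
    { destruct h as [h|h]; [exact h|]. exfalso. apply (Dnz x); lra. }
    destruct (MVT_cor2 g (Derive g) 0 1) as [xi [Hxi1 Hxi2]]; [lra| |].
    { intros c Hc. apply Dg. lra. }
    assert (Hr0 := Hrange 0 ltac:(lra)).
    assert (Hdxi : Derive g xi < 0).
    { destruct (Rtotal_order (Derive g xi) 0) as [h1|[h1|h1]]; [exact h1| |].
      - exfalso; apply (Dnz xi); lra.
      - exfalso. rewrite Hg1 in Hxi1. nra. }
    destruct (Rtotal_order xi x) as [h1|[h1|h1]].
    - destruct (Ranalysis5.IVT_interv (Derive g) xi x) as [z [Hz1 Hz2]].
      { intros t Ht. apply Cg1. lra. } { exact h1. } { lra. } { lra. }
      apply (Dnz z); lra.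
    - subst. lra.
    - destruct (Ranalysis5.IVT_interv (fun t => - Derive g t) x xi) as [z [Hz1 Hz2]].
      { intros t Ht. apply continuity_pt_opp. apply Cg1. lra. } { exact h1. } { lra. } { lra. }
      apply (Dnz z); lra. }
  assert (Gdec : forall x y, 0 <= x -> x < y -> y <= 1 -> g y < g x).
  { intros x y H1 H2 H3.
    destruct (MVT_cor2 g (Derive g) x y) as [xi [Hxi1 Hxi2]]; [lra| |].
    { intros c Hc. apply Dg. lra. }
    assert (Derive g xi < 0) by (apply Sneg; lra). nra. }
  assert (Hlam0 : 0 < lam) by lra.
  assert (Hc1pos : 0 < g 0).
  { assert (Hr0 := Hrange 0 ltac:(lra)).
    destruct (Req_dec (g 0) 0) as [h|h].
    - rewrite h in Hdc1. lra.
    - assert (H1 := Hmax (g 0) Hr0 h). rewrite Hgc1 in H1.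
      assert (H2 : - g 0 < g 0 * lam).
      { apply (Rmult_lt_compat_r lam) in H1; [|lra].
        replace (- g 0 / lam * lam) with (- g 0) in H1 by (field; lra). exact H1. }
      nra. }
  assert (Hq0pos : 0 < q0).
  { destruct (Rtotal_order q0 0) as [h|[h|h]]; [| |exact h].
    - assert (Hp := Spos q0 ltac:(lra)). lra.
    - subst q0. rewrite Hdc0 in Hdq0. lra. }
  assert (Hdm1ge : 1 <= Derive g (-1)).
  { destruct (Rlt_or_le (Derive g (-1)) 1) as [h|h]; [|exact h]. exfalso.
    assert (Hd := derivable_pt_lim_minus g id (-1) (Derive g (-1)) 1
                     (Dg (-1) ltac:(lra)) (derivable_pt_lim_id (-1))).
    destruct (L0 _ _ _ Hd ltac:(lra)) as [e [He Hx]].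
    set (hh := Rmin e 1 / 2).
    assert (0 < Rmin e 1) by (apply Rmin_pos; lra).
    assert (Rmin e 1 <= e) by apply Rmin_l. assert (Rmin e 1 <= 1) by apply Rmin_r.
    specialize (Hx hh ltac:(unfold hh; lra)). unfold minus_fct, id in Hx.
    rewrite Hgm1 in Hx.
    destruct (Ranalysis5.IVT_interv (fun t => g t - t) (-1 + hh) 0) as [z [Hz1 Hz2]].
    { intros t Ht. apply continuity_pt_minus. apply Cg. unfold hh in Ht; lra.
      apply derivable_continuous_pt. apply derivable_pt_id. }
    { unfold hh; lra. } { lra. } { lra. }
    assert (z <> 0). { intro e0. subst z. lra. }
    assert (Hz3 : -1 <= z < 0) by (unfold hh in Hz1; lra).
    assert (Hzz := Huniq z ltac:(lra) ltac:(lra) (Spos z Hz3)).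
    unfold hh in Hz1. lra. }
  assert (Dphi : forall y, -1 <= - y / lam <= 1 ->
     derivable_pt_lim (fun y => - lam * g (g (- y / lam))) y
        (Derive g (g (- y / lam)) * Derive g (- y / lam))).
  { intros y Hy. apply is_derive_Reals.
    assert (Hr := Hrange _ Hy).
    auto_derive.
    - unfold Rdiv in Hy, Hr. repeat split; apply Eg; assumption.
    - fixD g. unfold Rdiv. field. lra. }
  set (a := / lam).
  assert (Ha : 0 < a < 1 / 2).
  { unfold a. split. apply Rinv_0_lt_compat; lra.
    apply (Rmult_lt_reg_l lam); [lra|]. rewrite Rinv_r by lra. lra. }
  assert (Hma : - (-1) / lam = a) by (unfold a; field; lra).
  assert (HdmA : Derive g (-1) = Derive g (g a) * Derive g a).
  { rewrite <- Hma.
    apply (rightderiv_eq g (fun y => - lam * g (g (- y / lam))) (-1)).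
    - apply Dg; lra.
    - apply Dphi. rewrite Hma. lra.
    - exists 1. split; [lra|]. intros y Hy. apply Heq. lra. }
  destruct (Rtotal_order q0 a) as [Hlt|[Hqa|Hgt]].
  -
    exfalso.
    set (x := - lam * q0).
    assert (Hxq : - x / lam = q0) by (unfold x; field; lra).
    assert (Hx1 : -1 < x < 0).
    { unfold x. split; [|nra]. unfold a in Hlt.
      apply (Rmult_lt_compat_l lam) in Hlt; [|lra]. rewrite Rinv_r in Hlt by lra. lra. }
    assert (Hgx : g x = x).
    { rewrite Heq by lra. rewrite Hxq, Hgq0, Hgq0. unfold x. ring. }
    assert (Hdx : Derive g x = Derive g q0 ^ 2).
    { assert (E := rightderiv_eq g (fun y => - lam * g (g (- y / lam))) x
          (Derive g x) (Derive g (g (- x / lam)) * Derive g (- x / lam))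
          (Dg x ltac:(lra)) (Dphi x ltac:(rewrite Hxq; lra))).
      rewrite Hxq, Hgq0 in E. rewrite E. ring.
      exists (- x). split; [lra|]. intros y Hy. apply Heq. lra. }
    assert (Hpos : 0 < Derive g x) by (rewrite Hdx; nra).
    assert (H1 := Huniq x ltac:(lra) Hgx Hpos). lra.
  -
    rewrite HdmA, <- Hqa, Hgq0. ring.
  -
    exfalso.
    set (b := g a).
    assert (Hb : q0 < b).
    { unfold b. rewrite <- Hgq0 at 1. apply Gdec; lra. }
    assert (Hgb : g b = a).
    { assert (H1 := Heq (-1) ltac:(lra)). rewrite Hma, Hgm1 in H1. fold b in H1.
      unfold a. apply (Rmult_eq_reg_l lam); [|lra]. rewrite Rinv_r by lra. lra. }
    assert (Hb1 : b <= 1) by (apply (Hrange a); lra).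
    set (F1 := fun x => Derive g (g x) * Derive g x).
    set (F2 := fun x => Derive (Derive g) (g x) * (Derive g x)^2 + Derive g (g x) * Derive (Derive g) x).
    set (F3 := fun x => Derive (Derive (Derive g)) (g x) * (Derive g x)^3
          + 3 * Derive (Derive g) (g x) * Derive g x * Derive (Derive g) x
          + Derive g (g x) * Derive (Derive (Derive g)) x).
    assert (DF : forall x, -1 <= x <= 1 -> derivable_pt_lim (fun x => g (g x)) x (F1 x)).
    { intros x Hx. apply is_derive_Reals. assert (Hr := Hrange _ Hx). unfold F1.
      auto_derive.
      - repeat split; apply Eg; assumption.
      - fixD g. ring. }
    assert (DF1 : forall x, -1 <= x <= 1 -> derivable_pt_lim F1 x (F2 x)).
    { intros x Hx. apply is_derive_Reals. assert (Hr := Hrange _ Hx). unfold F1, F2.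
      auto_derive.
      - repeat split; try (apply Eg; assumption); try (apply Eg1; assumption).
      - fixD g. ring. }
    assert (DF2 : forall x, -1 <= x <= 1 -> derivable_pt_lim F2 x (F3 x)).
    { intros x Hx. apply is_derive_Reals. assert (Hr := Hrange _ Hx). unfold F2, F3.
      auto_derive.
      - repeat split; try (apply Eg; assumption); try (apply Eg1; assumption);
          try (apply Eg2; assumption).
      - fixD g. ring. }
    destruct (MVT_cor2 (fun x => g (g x)) F1 a q0) as [u [Hu1 Hu2]]; [lra| |].
    { intros c Hc. apply DF. lra. }
    rewrite Hgq0, Hgq0 in Hu1. fold b in Hu1. rewrite Hgb in Hu1.
    assert (HF1u : F1 u = 1).
    { apply (Rmult_eq_reg_r (q0 - a)); [|lra]. lra. }
    assert (HF1a : F1 a = Derive g (-1)) by (unfold F1; rewrite HdmA; reflexivity).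
    assert (HF1b : F1 b = Derive g (-1)) by (unfold F1; rewrite HdmA, Hgb; fold b; ring).
    destruct (continuity_ab_min F1 a b) as [m [Hm1 Hm2]];
      [lra| intros c Hc; apply derivable_continuous_pt; exists (F2 c); apply DF1; lra |].
    assert (Hint : exists m', a < m' < b /\ forall c, a <= c <= b -> F1 m' <= F1 c).
    { destruct (Req_dec m a) as [e|e].
      - exists u. split; [lra|]. intros c Hc. assert (H1 := Hm1 c Hc). assert (H2 := Hm1 u ltac:(lra)).
        subst m. lra.
      - destruct (Req_dec m b) as [e'|e'].
        + exists u. split; [lra|]. intros c Hc. assert (H1 := Hm1 c Hc). assert (H2 := Hm1 u ltac:(lra)).
          subst m. lra.
        + exists m. split; [lra|exact Hm1]. }
    destruct Hint as [m' [Hm'1 Hm'2]].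
    destruct (no_interior_min F1 F2 F3 a b m') as [HF2 HF3].
    { intros x Hx. apply DF1. lra. } { intros x Hx. apply DF2. lra. }
    { exact Hm'1. } { exact Hm'2. }
    assert (Hy1 : a < g m' < b).
    { split.
      - rewrite <- Hgb. apply Gdec; lra.
      - unfold b. apply Gdec; lra. }
    assert (Sy := Hschw (g m') ltac:(lra) ltac:(lra)).
    assert (Sm := Hschw m' ltac:(lra) ltac:(lra)).
    assert (Hp1 := Sneg (g m') ltac:(lra)).
    assert (Hq1 := Sneg m' ltac:(lra)).
    unfold schwarzian in Sy, Sm.
    change (Derive_n g 3 (g m')) with (Derive (Derive (Derive g)) (g m')) in Sy.
    change (Derive_n g 2 (g m')) with (Derive (Derive g) (g m')) in Sy.
    change (Derive_n g 3 m') with (Derive (Derive (Derive g)) m') in Sm.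
    change (Derive_n g 2 m') with (Derive (Derive g) m') in Sm.
    unfold F2, F3 in HF2, HF3.
    set (p1 := Derive g (g m')) in *. set (q1 := Derive g m') in *.
    set (p2 := Derive (Derive g) (g m')) in *. set (q2 := Derive (Derive g) m') in *.
    set (p3 := Derive (Derive (Derive g)) (g m')) in *.
    set (q3 := Derive (Derive (Derive g)) m') in *.
    set (Sy' := p3 / p1 - 3 / 2 * (p2 / p1) ^ 2) in *.
    set (Sm' := q3 / q1 - 3 / 2 * (q2 / q1) ^ 2) in *.
    assert (Hq2 : q2 = - p2 * q1 ^ 2 / p1).
    { unfold Rdiv. apply (Rmult_eq_reg_l p1); [|lra].
      replace (p1 * (- p2 * q1 ^ 2 * / p1)) with (- p2 * q1 ^ 2) by (field; lra). lra. }
    assert (E : p3 * q1 ^ 3 + 3 * p2 * q1 * q2 + p1 * q3 = p1 * q1 * (Sy' * q1 ^ 2 + Sm')).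
    { unfold Sy', Sm'. rewrite Hq2. field. split; lra. }
    assert (0 < p1 * q1) by nra.
    assert (Sy' * q1 ^ 2 + Sm' < 0) by nra.
    nra.
Qed.
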